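(* Let $G$ be a group generated by the conjugacy class $x^G$ of an element $x\in G$, and assume that the conjugation action of $x$ on $x^G$ (the permutation $y\mapsto xyx^{-1}$) has finite order $m$. Then for every $r\in\mathbb{N}$ with $\gcd(r,m)=1$, the conjugacy class $(x^r)^G$ of $x^r$ has the same cardinality as $x^G$. *)

(* Defs.v *)
From Stdlib Require Import Arith.

Record Group := {
  carrier :> Type;
  gmul : carrier -> carrier -> carrier;
  ginv : carrier -> carrier;
  gone : carrier;
  gmul_assoc : forall a b c, gmul a (gmul b c) = gmul (gmul a b) c;
  gmul_one_l : forall a, gmul gone a = a;
  gmul_one_r : forall a, gmul a gone = a;
  gmul_inv_l : forall a, gmul (ginv a) a = gone;
  gmul_inv_r : forall a, gmul a (ginv a) = gone
}.

Arguments gmul {g} _ _.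
Arguments ginv {g} _.
Arguments gone {g}.

Fixpoint gpow {G : Group} (x : G) (n : nat) : G :=
  match n with
  | 0 => gone
  | S k => gmul x (gpow x k)
  end.

Definition conj {G : Group} (g y : G) : G := gmul (gmul g y) (ginv g).

Definition conj_class {G : Group} (x : G) (y : G) : Prop :=
  exists g : G, y = conj g x.

Definition is_subgroup {G : Group} (H : G -> Prop) : Prop :=
  H gone /\ (forall a b, H a -> H b -> H (gmul a b)) /\ (forall a, H a -> H (ginv a)).

Definition generated_by {G : Group} (S : G -> Prop) : Prop :=
  forall H : G -> Prop, is_subgroup H -> (forall s, S s -> H s) -> forall g, H g.

(* The permutation y |-> x y x^-1 of x^G has finite order m:
   m is the least positive integer with (y |-> x y x^-1)^m = id on x^G.
   Note (y |-> x y x^-1)^k = (y |-> x^k y x^-k). *)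
Definition conj_action_order {G : Group} (x : G) (m : nat) : Prop :=
  0 < m /\
  (forall y, conj_class x y -> conj (gpow x m) y = y) /\
  (forall k, 0 < k < m -> exists y, conj_class x y /\ conj (gpow x k) y <> y).

Definition same_card {T : Type} (A B : T -> Prop) : Prop :=
  exists (f : {y | A y} -> {y | B y}) (g : {y | B y} -> {y | A y}),
    (forall a, g (f a) = a) /\ (forall b, f (g b) = b).

(* Main.v *)
Require Import Defs.
From Stdlib Require Import Arith Lia ProofIrrelevance.

Section S.
Context {G : Group}.

Definition central (c : G) := forall h : G, gmul c h = gmul h c.

Lemma inv_central c : central c -> central (ginv c).
Proof.
  intros Hc h.
  assert (E : gmul h (ginv c) = gmul (ginv c) (gmul (gmul c h) (ginv c))).
  { rewrite !gmul_assoc, gmul_inv_l, gmul_one_l. reflexivity. }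
  rewrite E, (Hc h), <- !gmul_assoc, gmul_inv_r, gmul_one_r. reflexivity.
Qed.

Lemma mul_central a b : central a -> central b -> central (gmul a b).
Proof.
  intros Ha Hb h. rewrite <- gmul_assoc, Hb, gmul_assoc, Ha, <- gmul_assoc. reflexivity.
Qed.

Lemma gpow_add (x : G) a b : gpow x (a + b) = gmul (gpow x a) (gpow x b).
Proof.
  induction a; simpl. now rewrite gmul_one_l. now rewrite IHa, gmul_assoc.
Qed.

Lemma gpow_mul (x : G) r s : gpow (gpow x r) s = gpow x (s * r).
Proof.
  induction s; simpl. reflexivity. now rewrite IHs, gpow_add.
Qed.

Lemma conj_mul (g a b : G) : gmul (conj g a) (conj g b) = conj g (gmul a b).
Proof.
  unfold conj. rewrite <- !gmul_assoc. rewrite (gmul_assoc _ (ginv g) g), gmul_inv_l, gmul_one_l.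
  reflexivity.
Qed.

Lemma conj_pow (g y : G) n : gpow (conj g y) n = conj g (gpow y n).
Proof.
  induction n; simpl.
  - unfold conj. now rewrite gmul_one_r, gmul_inv_r.
  - now rewrite IHn, conj_mul.
Qed.

Lemma conj_central (g u c : G) : central c -> gmul (conj g u) c = conj g (gmul u c).
Proof.
  intros Hc. unfold conj. rewrite <- !gmul_assoc. rewrite <- (Hc (ginv g)). reflexivity.
Qed.

Lemma pow_central (x : G) m a : central (gpow x m) -> central (gpow x (a * m)).
Proof.
  intros Hm. induction a; simpl.
  - intros h. now rewrite gmul_one_l, gmul_one_r.
  - rewrite gpow_add. now apply mul_central.
Qed.

End S.

Theorem mainTheorem6 (G : Group) (x : G) (m : nat) :
  generated_by (conj_class x) ->
  conj_action_order x m ->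
  forall r : nat, Nat.gcd r m = 1 ->
  same_card (conj_class (gpow x r)) (conj_class x).
Proof.
  intros Hgen [Hm [Hfix _]] r Hr.
  assert (Hc : central (gpow x m)).
  { set (z := gpow x m).
    assert (Hsub : is_subgroup (fun h : G => gmul z h = gmul h z)).
    { split; [|split].
      - now rewrite gmul_one_l, gmul_one_r.
      - intros a b Ha Hb. rewrite gmul_assoc, Ha, <- gmul_assoc, Hb, gmul_assoc. reflexivity.
      - intros a Ha.
        assert (E : gmul (ginv a) z = gmul (ginv a) (gmul (gmul z a) (ginv a))).
        { rewrite <- !gmul_assoc, gmul_inv_r, gmul_one_r. reflexivity. }
        rewrite E, Ha, !gmul_assoc, gmul_inv_l, gmul_one_l. reflexivity. }
    intros h. apply (Hgen _ Hsub). intros s Hs. specialize (Hfix s Hs).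
    unfold conj in Hfix. fold z in Hfix.
    rewrite <- Hfix at 2. rewrite <- !gmul_assoc, gmul_inv_l, gmul_one_r. reflexivity. }
  assert (Hb : exists s a b, s * r + a * m = 1 + b * m).
  { destruct r as [|r'].
    - simpl in Hr. subst m. exists 0, 1, 0. reflexivity.
    - destruct (Nat.gcd_bezout_pos (S r') m ltac:(lia)) as [s [b E]].
      rewrite Hr in E. exists s, 0, b. lia. }
  destruct Hb as [s [a [b E]]].
  set (psi := fun w : G => gmul (gmul (gpow w s) (gpow x (a * m))) (ginv (gpow x (b * m)))).
  assert (Key : forall g, psi (conj g (gpow x r)) = conj g x).
  { intros g. unfold psi. rewrite conj_pow, gpow_mul.
    rewrite conj_central by (apply pow_central; exact Hc).
    rewrite conj_central by (apply inv_central, pow_central; exact Hc).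
    rewrite <- gpow_add, E, gpow_add. simpl (gpow x 1). rewrite gmul_one_r.
    rewrite <- gmul_assoc, gmul_inv_r, gmul_one_r. reflexivity. }
  assert (P1 : forall w, conj_class (gpow x r) w -> conj_class x (psi w)).
  { intros w [g ->]. exists g. apply Key. }
  assert (P2 : forall y, conj_class x y -> conj_class (gpow x r) (gpow y r)).
  { intros y [g ->]. exists g. apply conj_pow. }
  exists (fun w => exist _ (psi (proj1_sig w)) (P1 _ (proj2_sig w))).
  exists (fun y => exist _ (gpow (proj1_sig y) r) (P2 _ (proj2_sig y))).
  split.
  - intros [w Hw]. apply eq_sig_hprop; [intros; apply proof_irrelevance|]. simpl.
    destruct Hw as [g ->]. rewrite Key. apply conj_pow.
  - intros [y Hy]. apply eq_sig_hprop; [intros; apply proof_irrelevance|]. simpl.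
    destruct Hy as [g ->]. rewrite conj_pow. apply Key.
Qed.
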